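(* Let $r,s,t$ be nonzero reals and $\lambda=(\lambda_k)_{k\ge0}$ a strictly increasing sequence of positive reals with $\lambda_k\to\infty$. For $a=(a_n)\in\omega$ and $k<n$ let $$\widehat g_k(n)=\lambda_k\left(\frac{1}{\lambda_k-\lambda_{k-1}}\sum_{j=k}^n d_{jk}a_j-\frac{1}{\lambda_{k+1}-\lambda_k}\sum_{j=k+1}^n d_{j,k+1}a_j\right),$$ and for $1\le q<\infty$ let $f_3^\lambda=\{a\in\omega:\sup_{n}\sum_{k=0}^{n-1}|\widehat g_k(n)|^q<\infty\}$ and $f_4^\lambda=\{a\in\omega:\sup_{n}\left|\frac1r\frac{\lambda_n}{\lambda_n-\lambda_{n-1}}a_n\right|<\infty\}$. Then (i) $\{c_0^\lambda(\widehat B)\}^\gamma=\{c^\lambda(\widehat B)\}^\gamma=\{\ell_\infty^\lambda(\widehat B)\}^\gamma=f_3^\lambda\cap f_4^\lambda$ with $q=1$; (ii) if $1<p<\infty$ and $\frac1p+\frac1q=1$, then $\{\ell_p^\lambda(\widehat B)\}^\gamma=f_3^\lambda\cap f_4^\lambda$.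
   Context: $\omega$: all complex sequences indexed by $\mathbb{N}=\{0,1,\dots\}$. Convention: terms with negative subscript are $0$. $D=(d_{nk})$ is the inverse of the lower triangular matrix $B(r,s,t)$ having $r$ on the diagonal, $s$ on the first subdiagonal, $t$ on the second subdiagonal and zeros elsewhere; explicitly $d_{nk}=\frac1r\sum_{v=0}^{n-k}\rho_1^{\,n-k-v}\rho_2^{\,v}$ ($0\le k\le n$), $d_{nk}=0$ ($k>n$), $\rho_{1,2}=\frac{-s\pm\sqrt{s^2-4tr}}{2r}$. With $\widehat W_n(x)=\frac{1}{\lambda_n}\sum_{k=0}^n(\lambda_k-\lambda_{k-1})(rx_k+sx_{k-1}+tx_{k-2})$, for $\mu\in\{c_0,c,\ell_\infty,\ell_p\}$ set $\mu^\lambda(\widehat B)=\{x\in\omega:(\widehat W_n(x))_n\in\mu\}$. The $\gamma$-dual of a sequence space $X$ is $X^\gamma=\{a\in\omega:\sup_n|\sum_{k=0}^n a_kx_k|<\infty\text{ for all }x\in X\}$. *)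

(* Defs.v *)
From Stdlib Require Import Reals.
From Coquelicot Require Import Coquelicot.
Open Scope R_scope.

(* Convention: terms with negative subscript are 0. *)
Definition prev1 {T} (z : T) (u : nat -> T) (k : nat) : T :=
  match k with O => z | S k' => u k' end.
Definition prev2 {T} (z : T) (u : nat -> T) (k : nat) : T :=
  match k with O | S O => z | S (S k') => u k' end.

(* Entries of the inverse D = (d_nk) of the lower triangular band matrix
   B(r,s,t): d_nk = e_{n-k} for k <= n, where e is determined by B D = I:
   r e_0 = 1, r e_1 + s e_0 = 0, r e_m + s e_{m-1} + t e_{m-2} = 0. *)
Fixpoint dseq (r s t : R) (m : nat) : R :=
  match m with
  | O => / r
  | S O => - s / (r * r)
  | S (S m2 as m1) => - (s * dseq r s t m1 + t * dseq r s t m2) / r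
  end.

Definition dmat (r s t : R) (n k : nat) : R :=
  if (k <=? n)%nat then dseq r s t (n - k) else 0.

Definition powp (x p : R) : R :=
  if Req_EM_T x 0 then 0 else Rpower x p.

Definition What (r s t : R) (lam : nat -> R) (x : nat -> C) (n : nat) : C :=
  Cmult (RtoC (/ lam n))
    (sum_n (fun k => Cmult (RtoC (lam k - prev1 0 lam k))
        (Cplus (Cplus (Cmult (RtoC r) (x k)) (Cmult (RtoC s) (prev1 (RtoC 0) x k)))
               (Cmult (RtoC t) (prev2 (RtoC 0) x k)))) n).

Definition c0_lam r s t lam (x : nat -> C) : Prop :=
  filterlim (What r s t lam x) eventually (locally (RtoC 0)).
Definition c_lam r s t lam (x : nat -> C) : Prop :=
  exists l : C, filterlim (What r s t lam x) eventually (locally l).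
Definition linf_lam r s t lam (x : nat -> C) : Prop :=
  exists M : R, forall n, Cmod (What r s t lam x n) <= M.
Definition lp_lam (p : R) r s t lam (x : nat -> C) : Prop :=
  ex_series (fun n => powp (Cmod (What r s t lam x n)) p).

Definition gamma_dual (X : (nat -> C) -> Prop) (a : nat -> C) : Prop :=
  forall x, X x -> exists M : R, forall n,
    Cmod (sum_n (fun k => Cmult (a k) (x k)) n) <= M.

Definition ghat r s t (lam : nat -> R) (a : nat -> C) (k n : nat) : C :=
  Cmult (RtoC (lam k))
   (Cminus
     (Cmult (RtoC (/ (lam k - prev1 0 lam k)))
        (sum_n_m (fun j => Cmult (RtoC (dmat r s t j k)) (a j)) k n))
     (Cmult (RtoC (/ (lam (S k) - lam k)))
        (sum_n_m (fun j => Cmult (RtoC (dmat r s t j (S k))) (a j)) (S k) n))).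

Definition f3 (q : R) r s t lam (a : nat -> C) : Prop :=
  exists M : R, forall n : nat,
    match n with
    | O => 0
    | S n' => sum_n (fun k => powp (Cmod (ghat r s t lam a k n)) q) n'
    end <= M.

Definition f4 r (lam : nat -> R) (a : nat -> C) : Prop :=
  exists M : R, forall n : nat,
    Cmod (Cmult (RtoC (/ r * (lam n / (lam n - prev1 0 lam n)))) (a n)) <= M.

(* Main.v *)
Require Import Defs.
From Stdlib Require Import Reals Lra Lia ClassicalEpsilon Classical FunctionalExtensionality.
From Coquelicot Require Import Coquelicot.
Open Scope R_scope.


Ltac cfix := change plus with Cplus in *; try change zero with (RtoC 0) in *; match goal with |- @eq _ ?a ?b => change (@eq C a b) end.
Ltac cring := cfix; ring.
Ltac cfield := cfix; field.

Lemma Rpower_pos x p : 0 < Rpower x p.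
Proof. unfold Rpower. apply exp_pos. Qed.

Lemma powp_0 p : powp 0 p = 0.
Proof. unfold powp. destruct (Req_EM_T 0 0); [reflexivity| lra]. Qed.

Lemma powp_pos x p : 0 < x -> powp x p = Rpower x p.
Proof. intro H. unfold powp. destruct (Req_EM_T x 0); [lra|reflexivity]. Qed.

Lemma powp_nonneg x p : 0 <= powp x p.
Proof. unfold powp. destruct (Req_EM_T x 0). lra. left; apply Rpower_pos. Qed.

Lemma powp_1 x : 0 <= x -> powp x 1 = x.
Proof. intro H. destruct (Req_dec x 0). subst; apply powp_0. rewrite powp_pos by lra. apply Rpower_1; lra. Qed.

Lemma powp_le x y p : 0 <= p -> 0 <= x <= y -> powp x p <= powp y p.
Proof.
  intros Hp [H1 H2]. destruct (Req_dec x 0). subst. rewrite powp_0. apply powp_nonneg.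
  rewrite !powp_pos by lra. apply Rle_Rpower_l; lra.
Qed.

Lemma powp_lt x y p : 0 < p -> 0 <= x < y -> powp x p < powp y p.
Proof.
  intros Hp [H1 H2]. destruct (Req_dec x 0). subst. rewrite powp_0. rewrite powp_pos by lra. apply Rpower_pos.
  rewrite !powp_pos by lra. apply Rlt_Rpower_l; lra.
Qed.

Lemma powp_one p : powp 1 p = 1.
Proof. rewrite powp_pos by lra. unfold Rpower. rewrite ln_1, Rmult_0_r. apply exp_0. Qed.

Lemma powp_le1 x p : 0 < p -> 0 <= x -> powp x p <= 1 -> x <= 1.
Proof.
  intros Hp Hx H. destruct (Rle_dec x 1); auto. exfalso.
  assert (powp 1 p < powp x p) by (apply powp_lt; lra). rewrite powp_one in H0. lra.
Qed.

Lemma powp_ge_self x q : 1 <= q -> 1 <= x -> x <= powp x q.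
Proof.
  intros Hq Hx. rewrite powp_pos by lra. rewrite <- (Rpower_1 x) at 1 by lra.
  apply Rle_Rpower; lra.
Qed.

Lemma powp_mul x y p : 0 <= x -> 0 <= y -> powp (x * y) p = powp x p * powp y p.
Proof.
  intros Hx Hy. destruct (Req_dec x 0). subst. rewrite Rmult_0_l, !powp_0; ring.
  destruct (Req_dec y 0). subst. rewrite Rmult_0_r, !powp_0; ring.
  rewrite !powp_pos by (try apply Rmult_lt_0_compat; lra). rewrite Rpower_mult_distr; auto; lra.
Qed.

Lemma powp_powp x a b : 0 <= x -> powp (powp x a) b = powp x (a * b).
Proof.
  intros Hx. destruct (Req_dec x 0). subst. rewrite !powp_0. reflexivity.
  rewrite (powp_pos x) by lra. rewrite powp_pos by apply Rpower_pos. rewrite powp_pos by lra.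
  apply Rpower_mult.
Qed.

Lemma powp_succ x a : 0 <= x -> 0 < a -> x * powp x a = powp x (a + 1).
Proof.
  intros Hx Ha. destruct (Req_dec x 0). subst. rewrite !powp_0. ring.
  rewrite !powp_pos by lra. rewrite Rpower_plus, Rpower_1 by lra. ring.
Qed.

Lemma powp_inv_exists X e : 0 < e -> exists T0, 0 < T0 /\ forall T, T0 <= T -> X <= powp T e.
Proof.
  intros He. destruct (Rle_dec X 0).
  - exists 1. split. lra. intros. pose proof (powp_nonneg T e). lra.
  - exists (Rpower X (/ e)). split. apply Rpower_pos. intros T HT.
    assert (0 < T) by (pose proof (Rpower_pos X (/e)); lra).
    rewrite powp_pos by lra.
    apply Rle_trans with (Rpower (Rpower X (/ e)) e).
    rewrite Rpower_mult. rewrite Rinv_l by lra. rewrite Rpower_1 by lra. lra.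
    apply Rle_Rpower_l; try lra. split; auto. apply Rpower_pos.
Qed.

Lemma sumR_le (f g : nat -> R) n : (forall k, (k <= n)%nat -> f k <= g k) -> sum_n f n <= sum_n g n.
Proof.
  intro H. induction n. rewrite !sum_O. apply H; lia.
  rewrite !sum_Sn. apply Rplus_le_compat. apply IHn; intros; apply H; lia. apply H; lia.
Qed.

Lemma sumR_nonneg (f : nat -> R) n : (forall k, (k <= n)%nat -> 0 <= f k) -> 0 <= sum_n f n.
Proof.
  intro H. induction n. rewrite sum_O. apply H; lia.
  rewrite sum_Sn. change plus with Rplus. apply Rplus_le_le_0_compat. apply IHn; intros; apply H; lia. apply H; lia.
Qed.

Lemma sumR_mono (f : nat -> R) m n : (forall k, 0 <= f k) -> (m <= n)%nat -> sum_n f m <= sum_n f n.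
Proof.
  intros H Hmn. induction Hmn. lra. rewrite sum_Sn. change plus with Rplus. pose proof (H (S m0)). lra.
Qed.

Lemma sumR_split (f : nat -> R) m n : (m <= n)%nat -> sum_n f n = sum_n f m + sum_n_m f (S m) n.
Proof. intro H. unfold sum_n. rewrite (sum_n_m_Chasles f 0 m n) by lia. reflexivity. Qed.

Lemma sumC_split (f : nat -> C) m n : (m <= n)%nat -> sum_n f n = Cplus (sum_n f m) (sum_n_m f (S m) n).
Proof. intro H. unfold sum_n. rewrite (sum_n_m_Chasles f 0 m n) by lia. reflexivity. Qed.

Lemma sumnmR_le (f g : nat -> R) m n : (forall k, (m <= k <= n)%nat -> f k <= g k) -> sum_n_m f m n <= sum_n_m g m n.
Proof.
  intro H. destruct (Compare_dec.le_lt_dec m n) as [Hmn|Hmn].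
  2:{ rewrite !sum_n_m_zero by lia. lra. }
  induction Hmn. rewrite !sum_n_n. apply H; lia.
  rewrite !sum_n_Sm by lia. apply Rplus_le_compat. apply IHHmn; intros; apply H; lia. apply H; lia.
Qed.

Lemma sumnmR_nonneg (f : nat -> R) m n : (forall k, 0 <= f k) -> 0 <= sum_n_m f m n.
Proof.
  intro H. destruct (Compare_dec.le_lt_dec m n) as [Hmn|Hmn].
  2:{ rewrite !sum_n_m_zero by lia. change (@zero R_AbelianMonoid) with 0. lra. }
  induction Hmn. rewrite !sum_n_n. apply H.
  rewrite !sum_n_Sm by lia. change plus with Rplus. pose proof (H (S m0)). lra.
Qed.

Lemma sumnmR_ge_term (f : nat -> R) m n k : (forall k, 0 <= f k) -> (m <= k <= n)%nat -> f k <= sum_n_m f m n.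
Proof.
  intros H Hk. rewrite (sum_n_m_Chasles f m k n) by lia.
  assert (Hm: (m <= k)%nat) by lia. destruct k as [|k'].
  - assert (m = 0%nat) by lia. subst. rewrite sum_n_n. change plus with Rplus.
    pose proof (sumnmR_nonneg f 1 n H). lra.
  - rewrite sum_n_Sm by lia. change plus with Rplus.
    pose proof (sumnmR_nonneg f m k' H). pose proof (sumnmR_nonneg f (S (S k')) n H). lra.
Qed.

Lemma Cmod_sum (f : nat -> C) n : Cmod (sum_n f n) <= sum_n (fun k => Cmod (f k)) n.
Proof.
  induction n. rewrite !sum_O. lra.
  rewrite !sum_Sn. change (@plus R_AbelianMonoid) with Rplus. change (@plus C_AbelianMonoid) with Cplus. eapply Rle_trans. apply Cmod_triangle. lra.
Qed.

Lemma Cmod_sum_nm (f : nat -> C) m n : Cmod (sum_n_m f m n) <= sum_n_m (fun k => Cmod (f k)) m n.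
Proof.
  destruct (Compare_dec.le_lt_dec m n) as [Hmn|Hmn].
  2:{ rewrite !sum_n_m_zero by lia. change (@zero C_AbelianMonoid) with (RtoC 0). change (@zero R_AbelianMonoid) with 0. rewrite Cmod_0. lra. }
  induction Hmn. rewrite !sum_n_n. lra.
  rewrite !sum_n_Sm by lia. change (@plus R_AbelianMonoid) with Rplus. change (@plus C_AbelianMonoid) with Cplus. eapply Rle_trans. apply Cmod_triangle. lra.
Qed.

Definition csg (z : C) : C := Cmult (Cconj z) (RtoC (/ Cmod z)).

Lemma csg_mul z : Cmult z (csg z) = RtoC (Cmod z).
Proof.
  unfold csg. destruct (Req_dec (Cmod z) 0) as [H|H].
  - apply Cmod_eq_0 in H. subst. rewrite Cmod_0. rewrite Cmult_0_l. reflexivity.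
  - rewrite Cmult_assoc, <- Cmod2_conj. rewrite <- RtoC_mult. f_equal. field. auto.
Qed.

Lemma csg_mod z : Cmod (csg z) <= 1.
Proof.
  unfold csg. rewrite Cmod_mult, Cmod_conj, Cmod_R. destruct (Req_dec (Cmod z) 0) as [H|H].
  - rewrite H, Rmult_0_l. lra.
  - rewrite Rabs_pos_eq. rewrite Rinv_r by auto. lra. left; apply Rinv_0_lt_compat. pose proof (Cmod_ge_0 z); lra.
Qed.


Definition Gsum (G : nat -> nat -> C) (y : nat -> C) n := sum_n (fun k => Cmult (G n k) (y k)) n.

Lemma Cmod_rev (a b : C) : Cmod b - Cmod a <= Cmod (Cplus a b).
Proof.
  assert (b = Cplus (Cplus a b) (Copp a)) by ring.
  pose proof (Cmod_triangle (Cplus a b) (Copp a)). rewrite <- H in H0.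
  replace (Copp a) with (Cmult (Copp (RtoC 1)) a) in H0 by ring.
  rewrite Cmod_mult, Cmod_m1 in H0. lra.
Qed.

Lemma hump (G : nat -> nat -> C) (Cc : nat -> R) (Q : nat -> nat -> nat -> (nat -> C) -> Prop) :
  (forall k, 0 <= Cc k) ->
  (forall n k, (k <= n)%nat -> Cmod (G n k) <= Cc k) ->
  (forall i m, exists n v, (m < n)%nat /\ (forall k, (S m <= k <= n)%nat -> Cmod (v k) <= 1) /\
      sum_n Cc m + INR i <= Cmod (sum_n_m (fun k => Cmult (G n k) (v k)) (S m) n) /\ Q i m n v) ->
  exists (N : nat -> nat) (V : nat -> nat -> C) (y : nat -> C),
    N 0%nat = 0%nat /\ (forall i, (N i < N (S i))%nat) /\ (forall i, Q i (N i) (N (S i)) (V i)) /\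
    (forall i k, (N i < k <= N (S i))%nat -> y k = V i k) /\ y 0%nat = RtoC 0 /\
    (forall i j, (i <= j)%nat -> (N i <= N j)%nat) /\ (forall i, (i <= N i)%nat) /\
    (forall k, (0 < k)%nat -> exists i, (N i < k <= N (S i))%nat) /\
    (forall M, exists n, M < Cmod (Gsum G y n)).
Proof.
  intros HC Hcol Hstep.
  assert (F : forall i m, {p : nat * (nat -> C) | (m < fst p)%nat /\ (forall k, (S m <= k <= fst p)%nat -> Cmod (snd p k) <= 1) /\
      sum_n Cc m + INR i <= Cmod (sum_n_m (fun k => Cmult (G (fst p) k) (snd p k)) (S m) (fst p)) /\ Q i m (fst p) (snd p)}).
  { intros i m. apply constructive_indefinite_description. destruct (Hstep i m) as (n & v & H). exists (n, v). exact H. }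
  set (N := fix N i := match i with O => O | S i' => fst (proj1_sig (F i' (N i'))) end).
  assert (HN0 : N 0%nat = 0%nat) by reflexivity.
  assert (HNS : forall i, N (S i) = fst (proj1_sig (F i (N i)))) by reflexivity.
  clearbody N.
  set (V := fun i => snd (proj1_sig (F i (N i)))).
  assert (HV : forall i, (N i < N (S i))%nat /\ (forall k, (S (N i) <= k <= N (S i))%nat -> Cmod (V i k) <= 1) /\
      sum_n Cc (N i) + INR i <= Cmod (sum_n_m (fun k => Cmult (G (N (S i)) k) (V i k)) (S (N i)) (N (S i))) /\ Q i (N i) (N (S i)) (V i)).
  { intro i. rewrite HNS. unfold V. exact (proj2_sig (F i (N i))). }
  clearbody V.
  assert (Hmono : forall i j, (i <= j)%nat -> (N i <= N j)%nat).
  { intros i j Hij. induction Hij. lia. pose proof (proj1 (HV m)). lia. }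
  assert (Hge : forall i, (i <= N i)%nat).
  { induction i. lia. pose proof (proj1 (HV i)). lia. }
  assert (Huniq : forall i j k, (N i < k <= N (S i))%nat -> (N j < k <= N (S j))%nat -> i = j).
  { intros i j k H1 H2. destruct (Nat.lt_trichotomy i j) as [h|[h|h]]; auto.
    - pose proof (Hmono (S i) j h). lia.
    - pose proof (Hmono (S j) i h). lia. }
  assert (Hex : forall k, (0 < k)%nat -> exists i, (N i < k <= N (S i))%nat).
  { intros k Hk. assert (forall j, (N 0 < k <= N j)%nat -> exists i, (N i < k <= N (S i))%nat).
    { induction j. lia. intros Hj. destruct (Compare_dec.le_lt_dec k (N j)).
      apply IHj; lia. exists j; lia. }
    apply (H k). pose proof (Hge k). lia. }
  set (y := fun k => match k with O => RtoC 0 | S _ => V (epsilon (inhabits 0%nat) (fun i => (N i < k <= N (S i))%nat)) k end).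
  assert (Hy : forall i k, (N i < k <= N (S i))%nat -> y k = V i k).
  { intros i k Hk. destruct k as [|k']. lia. unfold y.
    pose proof (epsilon_spec (inhabits 0%nat) (fun i => (N i < S k' <= N (S i))%nat) (Hex (S k') ltac:(lia))) as He.
    simpl in He. rewrite (Huniq _ _ _ He Hk). reflexivity. }
  assert (Hy1 : forall k, Cmod (y k) <= 1).
  { intro k. destruct k as [|k']. simpl. rewrite Cmod_0. lra.
    destruct (Hex (S k') ltac:(lia)) as [i Hi]. rewrite (Hy i _ Hi). apply (proj1 (proj2 (HV i))). lia. }
  exists N, V, y. split; auto. split. intro i; apply (HV i). split. intro i; apply (HV i).
  split; auto. split. reflexivity. split; auto. split; auto. split; auto.
  intros M. destruct (INR_unbounded M) as [i Hi]. exists (N (S i)).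
  unfold Gsum. rewrite (sumC_split _ (N i) (N (S i))) by (pose proof (proj1 (HV i)); lia).
  rewrite (sum_n_m_ext_loc (fun k => Cmult (G (N (S i)) k) (y k)) (fun k => Cmult (G (N (S i)) k) (V i k))).
  2:{ intros k Hk. rewrite (Hy i k) by lia. reflexivity. }
  destruct (HV i) as (_ & _ & Hb & _).
  assert (Hh : Cmod (sum_n (fun k => Cmult (G (N (S i)) k) (y k)) (N i)) <= sum_n Cc (N i)).
  { eapply Rle_trans. apply Cmod_sum. apply sumR_le. intros k Hk. rewrite Cmod_mult.
    pose proof (Hy1 k). pose proof (Cmod_ge_0 (y k)). pose proof (Cmod_ge_0 (G (N (S i)) k)).
    assert (Cmod (G (N (S i)) k) <= Cc k). { apply Hcol. pose proof (proj1 (HV i)). lia. }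
    apply Rle_trans with (Cmod (G (N (S i)) k) * 1). apply Rmult_le_compat_l; lra. lra. }
  pose proof (Cmod_rev (sum_n (fun k => Cmult (G (N (S i)) k) (y k)) (N i))
                      (sum_n_m (fun k => Cmult (G (N (S i)) k) (V i k)) (S (N i)) (N (S i)))).
  change plus with Cplus. lra.
Qed.


Definition c0P (y : nat -> C) := filterlim y eventually (locally (RtoC 0)).
Definition cP (y : nat -> C) := exists l, filterlim y eventually (locally l).
Definition linfP (y : nat -> C) := exists M : R, forall n, Cmod (y n) <= M.
Definition lpP (p : R) (y : nat -> C) := ex_series (fun n => powp (Cmod (y n)) p).
Definition Bnd (P : (nat -> C) -> Prop) (G : nat -> nat -> C) :=
  forall y, P y -> exists M, forall n, Cmod (Gsum G y n) <= M.
Definition rowq (q : R) (G : nat -> nat -> C) n := sum_n (fun k => powp (Cmod (G n k)) q) n.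
Definition RB q G := exists M, forall n, rowq q G n <= M.

Definition ek (k : nat) (j : nat) : C := if (j =? k)%nat then RtoC 1 else RtoC 0.

Lemma sum_delta (f : nat -> C) k n :
  sum_n (fun j => Cmult (f j) (ek k j)) n = if (k <=? n)%nat then f k else RtoC 0.
Proof.
  induction n.
  - rewrite sum_O. unfold ek. destruct k; simpl; cring.
  - rewrite sum_Sn, IHn. change plus with Cplus. unfold ek.
    destruct (Nat.leb_spec k n); destruct (Nat.leb_spec k (S n)); destruct (Nat.eqb_spec (S n) k); try lia; try cring.
    subst; cring.
Qed.

Lemma sumR_delta (k : nat) n :
  sum_n (fun j => if (j =? k)%nat then 1 else 0) n <= 1.
Proof.
  induction n.
  - rewrite sum_O. destruct (0 =? k)%nat; lra.
  - rewrite sum_Sn. change plus with Rplus. 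
    assert (sum_n (fun j => if (j =? k)%nat then 1 else 0) n = if (k <=? n)%nat then 1 else 0).
    { clear IHn. induction n. rewrite sum_O. destruct k; simpl; reflexivity.
      rewrite sum_Sn, IHn. change plus with Rplus.
      destruct (Nat.leb_spec k n); destruct (Nat.leb_spec k (S n)); destruct (Nat.eqb_spec (S n) k); try lia; lra. }
    rewrite H. destruct (Nat.leb_spec k n); destruct (Nat.eqb_spec (S n) k); try lia; lra.
Qed.

Lemma colbound P G : (forall k, P (ek k)) -> Bnd P G ->
  exists Cc : nat -> R, (forall k, 0 <= Cc k) /\ forall n k, (k <= n)%nat -> Cmod (G n k) <= Cc k.
Proof.
  intros He HB.
  assert (F : forall k, {M : R | forall n, Cmod (Gsum G (ek k) n) <= M}).
  { intro k. apply constructive_indefinite_description. apply HB, He. }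
  exists (fun k => proj1_sig (F k)). split.
  - intro k. pose proof (proj2_sig (F k) 0%nat). pose proof (Cmod_ge_0 (Gsum G (ek k) 0)). lra.
  - intros n k Hk. pose proof (proj2_sig (F k) n). unfold Gsum in H. rewrite sum_delta in H.
    replace ((k <=? n)%nat) with true in H by (symmetry; apply Nat.leb_le; auto). exact H.
Qed.

Lemma notRB q G : ~ RB q G -> forall M, exists n, M < rowq q G n.
Proof.
  intros H M. apply NNPP. intro H2. apply H. exists M. intro n. apply Rnot_lt_le. intro H3. apply H2. exists n. auto.
Qed.

Lemma sum_RtoC (f : nat -> R) m n : sum_n_m (fun k => RtoC (f k)) m n = RtoC (sum_n_m f m n).
Proof.
  destruct (Compare_dec.le_lt_dec m n) as [Hmn|Hmn].
  2:{ rewrite !sum_n_m_zero by lia. reflexivity. }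
  induction Hmn. rewrite !sum_n_n. reflexivity.
  rewrite !sum_n_Sm by lia. rewrite IHHmn. change (@plus C_AbelianMonoid) with Cplus. change (@plus R_AbelianMonoid) with Rplus.
  rewrite RtoC_plus. reflexivity.
Qed.

Lemma row_small q G Cc n m : 0 <= q -> (forall k, 0 <= Cc k) -> (forall n k, (k <= n)%nat -> Cmod (G n k) <= Cc k) ->
  (n <= m)%nat -> rowq q G n <= sum_n (fun k => powp (Cc k) q) m.
Proof.
  intros Hq HC Hcol Hnm. eapply Rle_trans with (sum_n (fun k => powp (Cc k) q) n).
  apply sumR_le. intros k Hk. apply powp_le; auto. split. apply Cmod_ge_0. auto.
  apply sumR_mono; auto. intros; apply powp_nonneg.
Qed.

Lemma row_split q G n m : (m <= n)%nat ->
  rowq q G n = sum_n (fun k => powp (Cmod (G n k)) q) m + sum_n_m (fun k => powp (Cmod (G n k)) q) (S m) n.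
Proof. intros. unfold rowq. apply sumR_split; auto. Qed.

Lemma head_le q G Cc n m : 0 <= q -> (forall n k, (k <= n)%nat -> Cmod (G n k) <= Cc k) -> (m <= n)%nat ->
  sum_n (fun k => powp (Cmod (G n k)) q) m <= sum_n (fun k => powp (Cc k) q) m.
Proof. intros. apply sumR_le. intros k Hk. apply powp_le; auto. split. apply Cmod_ge_0. apply H0. lia. Qed.

Lemma ball0 (z : C) (eps : posreal) : Cmod z < eps -> ball (RtoC 0) eps z.
Proof.
  intro H. apply (@norm_compat1 C_AbsRing C_NormedModule). change (Cmod (minus z (RtoC 0)) < eps).
  replace (minus z (RtoC 0)) with z. auto. unfold minus, plus, opp. simpl. 
  change (z = Cplus z (Copp (RtoC 0))). ring.
Qed.

Lemma sum_powp1 (f : nat -> R) m : (forall k, 0 <= f k) -> sum_n (fun k => powp (f k) 1) m = sum_n f m.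
Proof. intros H. apply sum_n_ext_loc. intros. apply powp_1; auto. Qed.

Lemma sum_nm_powp1 (f : nat -> R) a b : (forall k, 0 <= f k) -> sum_n_m (fun k => powp (f k) 1) a b = sum_n_m f a b.
Proof. intros H. apply sum_n_m_ext_loc. intros. apply powp_1; auto. Qed.

Lemma nec_c0 G : Bnd c0P G -> RB 1 G.
Proof.
  intros HB. apply NNPP. intro HnRB. pose proof (notRB _ _ HnRB) as Hun.
  destruct (colbound c0P G) as (Cc & HC & Hcol); auto.
  { intro k. unfold c0P. apply filterlim_ext_loc with (fun _ => RtoC 0).
    exists (S k). intros n Hn. unfold ek. destruct (Nat.eqb_spec n k). lia. reflexivity.
    apply filterlim_const. }
  destruct (hump G Cc (fun i m n v => forall k, (S m <= k <= n)%nat -> Cmod (v k) <= / INR (S i))) as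
    (N & V & y & HN0 & HNS & HQ & Hy & Hy0 & Hmono & Hge & Hex & Hunb); auto.
  - intros i m. set (Cs := sum_n Cc m).
    assert (HCs : 0 <= Cs) by (apply sumR_nonneg; auto).
    assert (Hi : 0 < INR (S i)) by (apply lt_0_INR; lia).
    destruct (Hun (Cs + INR (S i) * (Cs + INR i))) as [n Hn].
    assert (0 <= INR i) by apply pos_INR.
    assert (Hmn : (m < n)%nat).
    { destruct (Compare_dec.le_lt_dec n m); auto. exfalso.
      pose proof (row_small 1 G Cc n m ltac:(lra) HC Hcol l).
      rewrite (sum_powp1 Cc) in H0 by auto. fold Cs in H0. nra. }
    pose proof (row_split 1 G n m ltac:(lia)).
    pose proof (head_le 1 G Cc n m ltac:(lra) Hcol ltac:(lia)).
    rewrite (sum_powp1 Cc) in H1 by auto. rewrite (sum_powp1 (fun k => Cmod (G n k))) in H1, H0 by (intros; apply Cmod_ge_0). fold Cs in H1.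
    rewrite sum_nm_powp1 in H0 by (intros; apply Cmod_ge_0).
    set (T := sum_n_m (fun k => Cmod (G n k)) (S m) n) in *.
    exists n, (fun k => Cmult (RtoC (/ INR (S i))) (csg (G n k))).
    assert (Hv : forall k, Cmod (Cmult (RtoC (/ INR (S i))) (csg (G n k))) <= / INR (S i)).
    { intro k. rewrite Cmod_mult, Cmod_R, Rabs_pos_eq by (left; apply Rinv_0_lt_compat; lra).
      pose proof (csg_mod (G n k)). pose proof (Rinv_0_lt_compat _ Hi). 
      apply Rle_trans with (/ INR (S i) * 1). apply Rmult_le_compat_l; lra. lra. }
    assert (Hinv1 : / INR (S i) <= 1).
    { rewrite <- Rinv_1. apply Rinv_le_contravar. lra. rewrite S_INR. lra. }
    split; auto. split. intros k _. eapply Rle_trans. apply Hv. auto.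
    split. 2: intros; apply Hv.
    rewrite (sum_n_m_ext_loc _ (fun k => RtoC (/ INR (S i) * Cmod (G n k)))).
    2:{ intros k _. rewrite RtoC_mult, <- csg_mul. cring. }
    rewrite sum_RtoC, Cmod_R.
    rewrite (sum_n_m_ext_loc _ (fun k => scal (/ INR (S i)) (Cmod (G n k)))) by reflexivity.
    rewrite sum_n_m_scal_l. fold T. change (scal (/ INR (S i)) T) with (/ INR (S i) * T).
    assert (T >= INR (S i) * (Cs + INR i)) by lra.
    assert (0 <= T) by (unfold T; apply sumnmR_nonneg; intros; apply Cmod_ge_0).
    rewrite Rabs_pos_eq.
    apply Rmult_le_reg_l with (INR (S i)); auto. rewrite <- Rmult_assoc, Rinv_r by lra. apply Rle_trans with (1 * T); [lra|right; reflexivity].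
    apply Rmult_le_pos. left; apply Rinv_0_lt_compat; lra. apply Rle_trans with T; [lra|right; reflexivity].
  - assert (Hc : c0P y).
    { unfold c0P. apply filterlim_locally. intro eps.
      destruct (INR_unbounded (/ eps)) as [I HI]. exists (S (N I)). intros k Hk.
      apply ball0. destruct (Hex k ltac:(lia)) as [i Hi]. rewrite (Hy i k Hi).
      assert (HIi : (I <= i)%nat).
      { destruct (Compare_dec.le_lt_dec I i); auto. pose proof (Hmono (S i) I l). lia. }
      eapply Rle_lt_trans. apply HQ; lia.
      assert (He : 0 < / eps) by (apply Rinv_0_lt_compat; apply cond_pos).
      assert (INR I <= INR (S i)) by (apply le_INR; lia).
      rewrite <- (Rinv_inv eps). apply Rinv_lt_contravar. apply Rmult_lt_0_compat; lra. lra. }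
    destruct (HB y Hc) as [M HM]. destruct (Hunb M) as [n Hn]. pose proof (HM n). lra.
Qed.

Lemma pq_facts p q : 1 < p -> / p + / q = 1 -> 1 < q /\ (q - 1) * p = q /\ (p - 1) * (q - 1) = 1.
Proof.
  intros Hp H.
  assert (Hq0 : q <> 0).
  { intro E. subst. rewrite Rinv_0, Rplus_0_r in H. assert (p = 1). rewrite <- (Rinv_inv p), H. apply Rinv_1. lra. }
  assert (hq : q = p / (p - 1)).
  { rewrite <- (Rinv_inv q). replace (/ q) with (1 - / p) by lra. field. lra. }
  subst q. split. apply Rmult_lt_reg_r with (p - 1). lra. unfold Rdiv. rewrite Rmult_assoc, Rinv_l by lra. lra.
  split; field; lra.
Qed.

Lemma powp_inv x p : 0 < x -> powp (/ x) p = / powp x p.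
Proof.
  intro H. rewrite !powp_pos by (try apply Rinv_0_lt_compat; lra). unfold Rpower.
  rewrite ln_Rinv by lra. rewrite <- exp_Ropp. f_equal. ring.
Qed.

Lemma exser_bounded (f : nat -> R) M : (forall k, 0 <= f k) -> (forall n, sum_n f n <= M) -> ex_series f.
Proof.
  intros H1 H2. destruct (ex_finite_lim_seq_incr (sum_n f) M) as [l Hl]; auto.
  intro n. rewrite sum_Sn. change plus with Rplus. pose proof (H1 (S n)). lra.
  exists l. exact Hl.
Qed.

Lemma series_bound (f : nat -> R) : (forall k, 0 <= f k) -> ex_series f -> exists L, forall n, sum_n f n <= L.
Proof.
  intros H1 [l Hl]. exists l. apply is_lim_seq_incr_compare. exact Hl.
  intro n. rewrite sum_Sn. change plus with Rplus. pose proof (H1 (S n)). lra.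
Qed.

Lemma ek_lp p k : 0 < p -> lpP p (ek k).
Proof.
  intro Hp. apply exser_bounded with 1. intros; apply powp_nonneg.
  intro n. eapply Rle_trans. 2: apply (sumR_delta k n). right. apply sum_n_ext_loc. intros j _.
  unfold ek. destruct (j =? k)%nat. rewrite Cmod_1. apply powp_one. rewrite Cmod_0. apply powp_0.
Qed.

Lemma nec_p p q G : 1 < p -> / p + / q = 1 -> Bnd (lpP p) G -> RB q G.
Proof.
  intros Hp Hpq HB. destruct (pq_facts p q Hp Hpq) as (Hq & Hqp & Hpq1).
  apply NNPP. intro HnRB. pose proof (notRB _ _ HnRB) as Hun.
  destruct (colbound (lpP p) G) as (Cc & HC & Hcol); auto.
  { intro k. apply ek_lp. lra. }
  destruct (hump G Cc (fun i m n v => sum_n_m (fun k => powp (Cmod (v k)) p) (S m) n <= (/ 2) ^ i)) as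
    (N & V & y & HN0 & HNS & HQ & Hy & Hy0 & Hmono & Hge & Hex & Hunb); auto.
  - intros i m. set (Cs := sum_n Cc m).
    assert (HCs : 0 <= Cs) by (apply sumR_nonneg; auto).
    assert (0 <= INR i) by apply pos_INR.
    set (B := Cs + INR i + 1).
    assert (HBp : 0 < B) by (unfold B; lra).
    assert (HpB : 0 < powp B p) by (rewrite powp_pos by lra; apply Rpower_pos).
    assert (H2i : 0 < 2 ^ i) by (apply pow_lt; lra).
    set (X := 2 ^ i * powp B p).
    destruct (powp_inv_exists X (p - 1)) as (T0 & HT0 & HT0'). lra.
    set (Csq := sum_n (fun k => powp (Cc k) q) m).
    destruct (Hun (Csq + T0)) as [n Hn].
    assert (Hmn : (m < n)%nat).
    { destruct (Compare_dec.le_lt_dec n m); auto. exfalso.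
      pose proof (row_small q G Cc n m ltac:(lra) HC Hcol l). fold Csq in H0. lra. }
    pose proof (row_split q G n m ltac:(lia)).
    pose proof (head_le q G Cc n m ltac:(lra) Hcol ltac:(lia)). fold Csq in H1.
    set (T := sum_n_m (fun k => powp (Cmod (G n k)) q) (S m) n) in *.
    assert (HT : T0 < T) by lra.
    assert (HTp : 0 < T) by lra.
    set (c := B / T).
    assert (Hc : 0 < c) by (unfold c; apply Rdiv_lt_0_compat; lra).
    set (v := fun k => Cmult (RtoC (c * powp (Cmod (G n k)) (q - 1))) (csg (G n k))).
    assert (Hvk : forall k, powp (Cmod (v k)) p <= powp c p * powp (Cmod (G n k)) q).
    { intro k. unfold v. rewrite Cmod_mult, Cmod_R.
      assert (0 <= powp (Cmod (G n k)) (q - 1)) by apply powp_nonneg.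
      rewrite Rabs_pos_eq by nra.
      apply Rle_trans with (powp (c * powp (Cmod (G n k)) (q - 1)) p).
      apply powp_le. lra. split. apply Rmult_le_pos. nra. apply Cmod_ge_0.
      apply Rle_trans with (c * powp (Cmod (G n k)) (q - 1) * 1). apply Rmult_le_compat_l. nra. apply csg_mod. 
      lra.
      rewrite powp_mul by lra. rewrite powp_powp by apply Cmod_ge_0. rewrite Hqp. lra. }
    assert (HQs : sum_n_m (fun k => powp (Cmod (v k)) p) (S m) n <= (/ 2) ^ i).
    { eapply Rle_trans. apply sumnmR_le. intros k _. apply Hvk.
      rewrite (sum_n_m_ext_loc _ (fun k => scal (powp c p) (powp (Cmod (G n k)) q))) by reflexivity.
      rewrite sum_n_m_scal_l. change (powp c p * T <= (/ 2) ^ i).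
      unfold c, Rdiv. rewrite powp_mul by (first [lra | left; apply Rinv_0_lt_compat; lra]). rewrite (powp_inv T p HTp).
      pose proof (powp_succ T (p - 1) ltac:(lra) ltac:(lra)). replace (p - 1 + 1) with p in H2 by ring.
      rewrite <- H2.
      assert (HA : X <= powp T (p - 1)) by (apply HT0'; lra).
      assert (0 < X) by (unfold X; nra).
      rewrite Rinv_mult. rewrite <- Rinv_pow by lra.
      replace (powp B p * (/ T * / powp T (p - 1)) * T) with (powp B p * / powp T (p - 1)) by (field; lra).
      apply Rmult_le_reg_l with (2 ^ i). lra.
      replace (2 ^ i * / 2 ^ i) with 1 by (field; lra).
      apply Rmult_le_reg_r with (powp T (p - 1)). lra.
      replace (2 ^ i * (powp B p * / powp T (p - 1)) * powp T (p - 1)) with X by (unfold X; field; lra). lra. }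
    exists n, v. split; auto. split.
    { intros k Hk. apply (powp_le1 _ p). lra. apply Cmod_ge_0.
      eapply Rle_trans. apply (sumnmR_ge_term (fun k => powp (Cmod (v k)) p) (S m) n k). intros; apply powp_nonneg. auto.
      eapply Rle_trans. apply HQs. rewrite <- (pow1 i). apply pow_incr. lra. }
    split; auto.
    rewrite (sum_n_m_ext_loc _ (fun k => RtoC (c * powp (Cmod (G n k)) q))).
    2:{ intros k _. unfold v. rewrite Cmult_comm, <- Cmult_assoc, (Cmult_comm (csg _)), csg_mul.
        rewrite <- RtoC_mult. f_equal. rewrite Rmult_assoc. f_equal.
        rewrite Rmult_comm, powp_succ. f_equal; ring. apply Cmod_ge_0. lra. }
    rewrite sum_RtoC, Cmod_R.
    rewrite (sum_n_m_ext_loc _ (fun k => scal c (powp (Cmod (G n k)) q))) by reflexivity.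
    rewrite sum_n_m_scal_l. change (Cs + INR i <= Rabs (c * T)).
    replace (c * T) with B by (unfold c; field; lra). rewrite Rabs_pos_eq by lra. unfold B. lra.
  - assert (Hl : lpP p y).
    { apply exser_bounded with 2. intros; apply powp_nonneg.
      assert (Hblk : forall j, sum_n (fun k => powp (Cmod (y k)) p) (N j) <= 2 - 2 * (/ 2) ^ j).
      { induction j.
        - rewrite HN0, sum_O, Hy0, Cmod_0, powp_0. simpl. lra.
        - rewrite (sumR_split _ (N j) (N (S j))) by (pose proof (HNS j); lia).
          rewrite (sum_n_m_ext_loc _ (fun k => powp (Cmod (V j k)) p)).
          2:{ intros k Hk. rewrite (Hy j k) by lia. reflexivity. }
          pose proof (HQ j). simpl. lra. }
      intro n. eapply Rle_trans. apply (sumR_mono _ n (N n)). intros; apply powp_nonneg. apply Hge.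
      eapply Rle_trans. apply Hblk. pose proof (pow_lt (/2) n ltac:(lra)). lra. }
    destruct (HB y Hl) as [M HM]. destruct (Hunb M) as [n Hn]. pose proof (HM n). lra.
Qed.

Lemma Gsum_le G y n : Cmod (Gsum G y n) <= sum_n (fun k => Cmod (G n k) * Cmod (y k)) n.
Proof.
  unfold Gsum. eapply Rle_trans. apply Cmod_sum. right. apply sum_n_ext_loc. intros. apply Cmod_mult.
Qed.

Lemma sumR_mult_r (f : nat -> R) c n : sum_n (fun k => f k * c) n = sum_n f n * c.
Proof. induction n. rewrite !sum_O. reflexivity. rewrite !sum_Sn, IHn. change plus with Rplus. change (sum_n f n * c + f (S n) * c = (sum_n f n + f (S n)) * c). ring. Qed.

Lemma suff_inf G : RB 1 G -> Bnd linfP G.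
Proof.
  intros [M HM] y [My HMy]. exists (Rmax My 0 * M). intro n.
  eapply Rle_trans. apply Gsum_le.
  apply Rle_trans with (sum_n (fun k => Cmod (G n k) * Rmax My 0) n).
  apply sumR_le. intros k _. apply Rmult_le_compat_l. apply Cmod_ge_0.
  eapply Rle_trans. apply HMy. apply Rmax_l.
  rewrite sumR_mult_r.
  rewrite Rmult_comm. apply Rmult_le_compat_l. apply Rmax_r.
  pose proof (HM n). unfold rowq in H. rewrite sum_powp1 in H by (intros; apply Cmod_ge_0). exact H.
Qed.

Lemma conv_bnd y : cP y -> linfP y.
Proof.
  intros [l Hl]. apply filterlim_locally with (eps := mkposreal 1 Rlt_0_1) in Hl.
  destruct Hl as [N0 HN0].
  exists (sum_n (fun k => Cmod (y k)) N0 + Cmod l + @norm_factor C_AbsRing C_NormedModule).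
  pose proof (@norm_factor_gt_0 C_AbsRing C_NormedModule).
  pose proof (Cmod_ge_0 l).
  assert (0 <= sum_n (fun k => Cmod (y k)) N0) by (apply sumR_nonneg; intros; apply Cmod_ge_0).
  intro n. destruct (Compare_dec.le_lt_dec N0 n).
  - pose proof (@norm_compat2 C_AbsRing C_NormedModule l (y n) (mkposreal 1 Rlt_0_1) (HN0 n l0)).
    change (Cmod (Cplus (y n) (Copp l)) < @norm_factor C_AbsRing C_NormedModule * 1) in H2.
    replace (y n) with (Cplus (Cplus (y n) (Copp l)) l) by ring.
    eapply Rle_trans. apply Cmod_triangle. simpl in H2. lra.
  - apply Rle_trans with (sum_n (fun k => Cmod (y k)) N0). unfold sum_n.
    apply (sumnmR_ge_term (fun k => Cmod (y k)) 0 N0 n). intros; apply Cmod_ge_0. lia. lra.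
Qed.

Lemma inf_c G : Bnd linfP G -> Bnd cP G.
Proof. intros H y Hy. apply H, conv_bnd, Hy. Qed.

Lemma c_c0 G : Bnd cP G -> Bnd c0P G.
Proof. intros H y Hy. apply H. exists (RtoC 0). exact Hy. Qed.

Lemma young p q x z : 1 < p -> / p + / q = 1 -> 0 <= x -> 0 <= z -> x * z <= powp x q + powp z p.
Proof.
  intros Hp Hpq Hx Hz. destruct (pq_facts p q Hp Hpq) as (Hq & Hqp & Hpq1).
  pose proof (powp_nonneg x q). pose proof (powp_nonneg z p).
  destruct (Rle_dec x (powp z (p - 1))).
  - apply Rle_trans with (powp z (p - 1) * z). apply Rmult_le_compat_r; auto.
    rewrite Rmult_comm, powp_succ by lra. replace (p - 1 + 1) with p by ring. lra.
  - assert (z <= powp x (q - 1)).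
    { destruct (Req_dec z 0). subst. apply powp_nonneg.
      replace z with (powp (powp z (p - 1)) (q - 1)).
      left. apply powp_lt. lra. split. apply powp_nonneg. lra.
      rewrite powp_powp by lra. rewrite Hpq1. apply powp_1. lra. }
    apply Rle_trans with (x * powp x (q - 1)). apply Rmult_le_compat_l; auto.
    rewrite powp_succ by lra. replace (q - 1 + 1) with q by ring. lra.
Qed.

Lemma suff_p p q G : 1 < p -> / p + / q = 1 -> RB q G -> Bnd (lpP p) G.
Proof.
  intros Hp Hpq [M HM] y Hy.
  destruct (series_bound _ (fun k => powp_nonneg _ _) Hy) as [L HL].
  exists (M + L). intro n. eapply Rle_trans. apply Gsum_le.
  apply Rle_trans with (sum_n (fun k => plus (powp (Cmod (G n k)) q) (powp (Cmod (y k)) p)) n).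
  apply sumR_le. intros k _. apply young; auto; apply Cmod_ge_0.
  rewrite sum_n_plus. pose proof (HM n). pose proof (HL n). unfold rowq in H. change plus with Rplus. lra.
Qed.

Section Alg.
Variables (r s t : R) (lam : nat -> R).
Hypothesis hr : r <> 0.
Hypothesis hlam : forall k, lam k <> 0.
Hypothesis hdel : forall k, lam k - prev1 0 lam k <> 0.

Definition Del k := lam k - prev1 0 lam k.
Definition Bx (x : nat -> C) k : C :=
  Cplus (Cplus (Cmult (RtoC r) (x k)) (Cmult (RtoC s) (prev1 (RtoC 0) x k)))
               (Cmult (RtoC t) (prev2 (RtoC 0) x k)).

Lemma sumC_ext (f g : nat -> C) n : (forall k, (k <= n)%nat -> f k = g k) -> sum_n f n = sum_n g n.
Proof. apply sum_n_ext_loc. Qed.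

Lemma sumC_lin3 (a b c : C) (f g h : nat -> C) n :
  sum_n (fun k => Cplus (Cplus (Cmult a (f k)) (Cmult b (g k))) (Cmult c (h k))) n
  = Cplus (Cplus (Cmult a (sum_n f n)) (Cmult b (sum_n g n))) (Cmult c (sum_n h n)).
Proof.
  induction n. rewrite !sum_O. reflexivity.
  rewrite !sum_Sn, IHn. cring.
Qed.

Lemma sumC_zero (f : nat -> C) n : (forall k, (k <= n)%nat -> f k = RtoC 0) -> sum_n f n = RtoC 0.
Proof.
  intros H; induction n. rewrite sum_O; auto.
  rewrite sum_Sn, IHn by (intros; apply H; lia). rewrite H by lia. cring.
Qed.

Let e := dseq r s t.
Lemma e0 : r * e 0 = 1. Proof. unfold e; simpl. field. auto. Qed.
Lemma e1 : r * e 1 + s * e 0 = 0. Proof. unfold e; simpl. field. auto. Qed.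
Lemma e2 m : r * e (S (S m)) + s * e (S m) + t * e m = 0.
Proof. unfold e. change (dseq r s t (S (S m))) with (- (s * dseq r s t (S m) + t * dseq r s t m) / r). field. auto. Qed.

Definition Pconv (u : nat -> C) m := sum_n (fun k => Cmult (RtoC (dmat r s t m k)) (u k)) m.

Lemma Pconv_rec (u : nat -> C) m : Bx (Pconv u) m = u m.
Proof.
  unfold Bx, Pconv, dmat.
  destruct m as [|[|m]]; cbn [prev1 prev2].
  - rewrite sum_O. simpl Nat.leb. simpl Nat.sub. 
    transitivity (Cmult (RtoC (r * e 0)) (u 0%nat)). rewrite RtoC_mult. unfold e. change (dseq r s t 0) with (/r) in *. cring.
    rewrite e0. cring.
  - rewrite sum_Sn, !sum_O. change plus with Cplus. simpl Nat.leb. simpl Nat.sub.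
    transitivity (Cplus (Cmult (RtoC (r * e 1 + s * e 0)) (u 0%nat)) (Cmult (RtoC (r * e 0)) (u 1%nat))).
    rewrite !RtoC_plus, !RtoC_mult. unfold e. change (dseq r s t 0) with (/r) in *. cring.
    rewrite e0, e1. cring.
  - rewrite !sum_Sn. change plus with Cplus.
    rewrite !Nat.leb_refl.
    rewrite (sumC_ext (fun k => Cmult (RtoC (if (k <=? S (S m))%nat then dseq r s t (S (S m) - k) else 0)) (u k))
       (fun k => Cmult (RtoC (e (S (S (m - k))))) (u k))).
    2:{ intros k Hk. replace ((k <=? S (S m))%nat) with true by (symmetry; apply Nat.leb_le; lia).
        f_equal. f_equal. unfold e. f_equal. lia. }
    rewrite (sumC_ext (fun k => Cmult (RtoC (if (k <=? S m)%nat then dseq r s t (S m - k) else 0)) (u k))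
       (fun k => Cmult (RtoC (e (S (m - k)))) (u k))).
    2:{ intros k Hk. replace ((k <=? S m)%nat) with true by (symmetry; apply Nat.leb_le; lia).
        f_equal. f_equal. unfold e. f_equal. lia. }
    rewrite (sumC_ext (fun k => Cmult (RtoC (if (k <=? m)%nat then dseq r s t (m - k) else 0)) (u k))
       (fun k => Cmult (RtoC (e (m - k))) (u k))).
    2:{ intros k Hk. replace ((k <=? m)%nat) with true by (symmetry; apply Nat.leb_le; lia).
        reflexivity. }
    replace ((S m <=? S (S m))%nat) with true by (symmetry; apply Nat.leb_le; lia).
    replace (S (S m) - S m)%nat with 1%nat by lia.
    replace (S (S m) - S (S m))%nat with 0%nat by lia.
    replace (S m - S m)%nat with 0%nat by lia.
    set (A := sum_n (fun k => Cmult (RtoC (e (S (S (m - k))))) (u k)) m).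
    set (B := sum_n (fun k => Cmult (RtoC (e (S (m - k)))) (u k)) m).
    set (D := sum_n (fun k => Cmult (RtoC (e (m - k))) (u k)) m).
    assert (HABD : Cplus (Cplus (Cmult (RtoC r) A) (Cmult (RtoC s) B)) (Cmult (RtoC t) D) = RtoC 0).
    { unfold A, B, D. rewrite <- sumC_lin3. apply sumC_zero. intros k Hk.
      transitivity (Cmult (RtoC (r * e (S (S (m - k))) + s * e (S (m - k)) + t * e (m - k))) (u k)).
      rewrite !RtoC_plus, !RtoC_mult. cring. rewrite e2. cring. }
    transitivity (Cplus (Cplus (Cplus (Cmult (RtoC r) A) (Cmult (RtoC s) B)) (Cmult (RtoC t) D))
      (Cplus (Cmult (RtoC (r * e 1 + s * e 0)) (u (S m))) (Cmult (RtoC (r * e 0)) (u (S (S m)))))).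
    rewrite !RtoC_plus, !RtoC_mult. unfold e. cring.
    rewrite HABD, e0, e1. cring.
Qed.

Lemma cancelR (c : R) (a b : C) : c <> 0 -> Cmult (RtoC c) a = Cmult (RtoC c) b -> a = b.
Proof.
  intros Hc H. assert (Hc' : RtoC c <> RtoC 0) by (intro E; apply Hc; injection E; auto).
  transitivity (Cmult (Cinv (RtoC c)) (Cmult (RtoC c) a)). cfield. auto.
  rewrite H. cfield. auto.
Qed.

Lemma Bx_unique (x y : nat -> C) : (forall m, Bx x m = Bx y m) -> forall m, x m = y m.
Proof.
  intros H. assert (forall m, x m = y m /\ x (S m) = y (S m)).
  { induction m.
    - assert (h0 : x 0%nat = y 0%nat).
      { specialize (H 0%nat). unfold Bx in H; cbn [prev1 prev2] in H.
        apply (cancelR r); auto.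
        transitivity (Cplus (Cplus (Cmult (RtoC r) (x 0%nat)) (Cmult (RtoC s) (RtoC 0))) (Cmult (RtoC t) (RtoC 0))). cring.
        rewrite H. cring. }
      split; auto. specialize (H 1%nat). unfold Bx in H; cbn [prev1 prev2] in H. rewrite h0 in H.
      apply (cancelR r); auto.
      transitivity (Cminus (Cplus (Cplus (Cmult (RtoC r) (x 1%nat)) (Cmult (RtoC s) (y 0%nat))) (Cmult (RtoC t) (RtoC 0))) (Cmult (RtoC s) (y 0%nat))). cring.
      rewrite H. cring.
    - destruct IHm as [h1 h2]. split; auto.
      specialize (H (S (S m))). unfold Bx in H; cbn [prev1 prev2] in H. rewrite h1, h2 in H.
      apply (cancelR r); auto.
      transitivity (Cminus (Cplus (Cplus (Cmult (RtoC r) (x (S (S m)))) (Cmult (RtoC s) (y (S m)))) (Cmult (RtoC t) (y m))) (Cplus (Cmult (RtoC s) (y (S m))) (Cmult (RtoC t) (y m)))). cring.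
      rewrite H. cring. }
  intro m; apply H0.
Qed.

Lemma x_eq_Du (x : nat -> C) m : x m = Pconv (Bx x) m.
Proof. apply Bx_unique. intro k. rewrite Pconv_rec. reflexivity. Qed.


Lemma RtoC_neq (c : R) : c <> 0 -> RtoC c <> RtoC 0.
Proof. intros Hc E; apply Hc; injection E; auto. Qed.

Lemma F_eq (x : nat -> C) n :
  Cmult (RtoC (lam n)) (What r s t lam x n) = sum_n (fun k => Cmult (RtoC (Del k)) (Bx x k)) n.
Proof.
  unfold What, Del, Bx. rewrite RtoC_inv by auto. cfield. apply RtoC_neq; auto.
Qed.

Lemma sumC_addmul (f g : nat -> C) (c : C) n :
  sum_n (fun k => Cplus (f k) (Cmult c (g k))) n = Cplus (sum_n f n) (Cmult c (sum_n g n)).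
Proof. induction n. rewrite !sum_O. reflexivity. rewrite !sum_Sn, IHn. cring. Qed.

Definition Sn (a : nat -> C) n k := sum_n_m (fun j => Cmult (RtoC (dmat r s t j k)) (a j)) k n.

Lemma L_ind (a x : nat -> C) n :
  sum_n (fun m => Cmult (a m) (x m)) n = sum_n (fun k => Cmult (Sn a n k) (Bx x k)) n.
Proof.
  induction n.
  - rewrite !sum_O. unfold Sn. rewrite sum_n_n. rewrite (x_eq_Du x 0). unfold Pconv. rewrite sum_O. cring.
  - rewrite sum_Sn, IHn. rewrite (sum_Sn (fun k => Cmult (Sn a (S n) k) (Bx x k))).
    rewrite (sumC_ext (fun k => Cmult (Sn a (S n) k) (Bx x k))
       (fun k => Cplus (Cmult (Sn a n k) (Bx x k)) (Cmult (a (S n)) (Cmult (RtoC (dmat r s t (S n) k)) (Bx x k))))).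
    2:{ intros k Hk. unfold Sn. rewrite sum_n_Sm by lia. cring. }
    rewrite sumC_addmul. rewrite (x_eq_Du x (S n)). unfold Pconv. rewrite sum_Sn.
    unfold Sn. rewrite sum_n_n. cring.
Qed.

Lemma sbp (g F : nat -> C) n :
  Cplus (sum_n (fun k => Cmult (Cminus (g k) (g (S k))) (F k)) n) (Cmult (g (S n)) (F n))
  = sum_n (fun k => Cmult (g k) (Cminus (F k) (prev1 (RtoC 0) F k))) n.
Proof.
  induction n.
  - rewrite !sum_O. simpl prev1. cring.
  - rewrite !sum_Sn. rewrite <- IHn. simpl prev1. cring.
Qed.

Definition Gm (a : nat -> C) n k : C :=
  if (k <? n)%nat then ghat r s t lam a k n
  else if (k =? n)%nat then Cmult (RtoC (/ r * (lam n / (lam n - prev1 0 lam n)))) (a n)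
  else RtoC 0.

Lemma main_id (a x : nat -> C) n :
  sum_n (fun m => Cmult (a m) (x m)) n = sum_n (fun k => Cmult (Gm a n k) (What r s t lam x k)) n.
Proof.
  rewrite L_ind.
  set (g := fun k => Cmult (RtoC (/ Del k)) (Sn a n k)).
  set (F := fun k => Cmult (RtoC (lam k)) (What r s t lam x k)).
  assert (HF : forall k, Cminus (F k) (prev1 (RtoC 0) F k) = Cmult (RtoC (Del k)) (Bx x k)).
  { intro k. unfold F. destruct k as [|k]; cbn [prev1]; rewrite !F_eq.
    rewrite sum_O. cring. rewrite sum_Sn. cring. }
  assert (Hg : g (S n) = RtoC 0).
  { unfold g, Sn. rewrite sum_n_m_zero by lia. cring. }
  transitivity (sum_n (fun k => Cmult (g k) (Cminus (F k) (prev1 (RtoC 0) F k))) n).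
  { apply sumC_ext. intros k _. rewrite HF. unfold g. 
    transitivity (Cmult (Cmult (RtoC (/ Del k)) (RtoC (Del k))) (Cmult (Sn a n k) (Bx x k))). 2: cring.
    rewrite <- RtoC_mult, Rinv_l by (apply hdel). cring. }
  rewrite <- sbp. rewrite Hg. rewrite Cmult_0_l. cfix. rewrite Cplus_0_r.
  apply sumC_ext. intros k Hk. unfold Gm, F.
  destruct (Nat.ltb_spec k n).
  - unfold ghat, g. replace (lam (S k) - lam k) with (Del (S k)) by reflexivity.
    unfold Sn, Del. cring.
  - replace k with n by lia. rewrite Nat.eqb_refl.
    replace (g n) with (Cmult (RtoC (/ Del n)) (Cmult (RtoC (/ r)) (a n))).
    2:{ unfold g, Sn. rewrite sum_n_n. unfold dmat. rewrite Nat.leb_refl, Nat.sub_diag. reflexivity. }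
    replace (g (S n)) with (RtoC 0) by (symmetry; exact Hg).
    replace (RtoC (/ r * (lam n / (lam n - prev1 0 lam n))))
      with (Cmult (RtoC (/ Del n)) (Cmult (RtoC (/ r)) (RtoC (lam n)))).
    cring. rewrite <- !RtoC_mult. f_equal. unfold Del. field. split; auto.
Qed.

Lemma What_surj (y : nat -> C) : exists x, forall n, What r s t lam x n = y n.
Proof.
  set (ly := fun j => Cmult (RtoC (lam j)) (y j)).
  set (v := fun k => Cmult (RtoC (/ Del k)) (Cminus (ly k) (prev1 (RtoC 0) ly k))).
  exists (Pconv v). intro n.
  apply (cancelR (lam n)); auto. rewrite F_eq.
  rewrite (sumC_ext _ (fun k => Cminus (ly k) (prev1 (RtoC 0) ly k))).
  2:{ intros k _. rewrite Pconv_rec. unfold v.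
      transitivity (Cmult (Cmult (RtoC (Del k)) (RtoC (/ Del k))) (Cminus (ly k) (prev1 (RtoC 0) ly k))). cring.
      rewrite <- RtoC_mult, Rinv_r by apply hdel. cring. }
  induction n. rewrite sum_O. simpl prev1. unfold ly. cring.
  rewrite sum_Sn, IHn. simpl prev1. unfold ly. cring.
Qed.

End Alg.


Lemma rowq_Gm r s t lam a q n :
  rowq q (Gm r s t lam a) n =
  match n with O => 0 | S n' => sum_n (fun k => powp (Cmod (ghat r s t lam a k n)) q) n' end +
  powp (Cmod (Cmult (RtoC (/ r * (lam n / (lam n - prev1 0 lam n)))) (a n))) q.
Proof.
  unfold rowq. destruct n as [|n'].
  - rewrite sum_O. unfold Gm. simpl. ring.
  - rewrite sum_Sn. change plus with Rplus. f_equal.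
    + apply sum_n_ext_loc. intros k Hk. unfold Gm.
      replace ((k <? S n')%nat) with true by (symmetry; apply Nat.ltb_lt; lia). reflexivity.
    + unfold Gm. rewrite Nat.ltb_irrefl, Nat.eqb_refl. reflexivity.
Qed.

Lemma f34_RB r s t lam a q : 1 <= q -> (f3 q r s t lam a /\ f4 r lam a) <-> RB q (Gm r s t lam a).
Proof.
  intros Hq. split.
  - intros [[M3 H3] [M4 H4]]. exists (M3 + powp (Rmax M4 0) q). intro n. rewrite rowq_Gm.
    pose proof (H3 n). apply Rplus_le_compat. exact H.
    apply powp_le. lra. split. apply Cmod_ge_0. eapply Rle_trans. apply H4. apply Rmax_l.
  - intros [M HM]. split.
    + exists M. intro n. pose proof (HM n). rewrite rowq_Gm in H.
      pose proof (powp_nonneg (Cmod (Cmult (RtoC (/ r * (lam n / (lam n - prev1 0 lam n)))) (a n))) q). lra.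
    + exists (Rmax 1 M). intro n. pose proof (HM n). rewrite rowq_Gm in H.
      set (h := Cmod (Cmult (RtoC (/ r * (lam n / (lam n - prev1 0 lam n)))) (a n))) in *.
      assert (0 <= match n with O => 0 | S n' => sum_n (fun k => powp (Cmod (ghat r s t lam a k n)) q) n' end).
      { destruct n. lra. apply sumR_nonneg. intros; apply powp_nonneg. }
      destruct (Rle_dec h 1). eapply Rle_trans. exact r0. apply Rmax_l.
      eapply Rle_trans. apply (powp_ge_self h q); lra. eapply Rle_trans. 2: apply Rmax_r. lra.
Qed.

Lemma red r s t lam (hr : r <> 0) (hlam : forall k, lam k <> 0) (hdel : forall k, lam k - prev1 0 lam k <> 0)
  (P : (nat -> C) -> Prop) a :
  gamma_dual (fun x => P (What r s t lam x)) a <-> Bnd P (Gm r s t lam a).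
Proof.
  split.
  - intros Hg y Py. destruct (What_surj r s t lam hr hlam hdel y) as [x Hx].
    assert (E : What r s t lam x = y) by (apply functional_extensionality; auto).
    destruct (Hg x) as [M HM]. rewrite E; auto. exists M. intro n. unfold Gsum. rewrite <- E.
    rewrite <- (main_id r s t lam hr hlam hdel). apply HM.
  - intros HB x Px. destruct (HB _ Px) as [M HM]. exists M. intro n. rewrite (main_id r s t lam hr hlam hdel). apply HM.
Qed.

Theorem theorem10 (r s t : R) (lam : nat -> R)
  (hr : r <> 0) (hs : s <> 0) (ht : t <> 0)
  (hpos : forall k, 0 < lam k)
  (hinc : forall k, lam k < lam (S k))
  (hinf : is_lim_seq lam p_infty) :
  (forall a : nat -> C,
     (gamma_dual (c0_lam r s t lam) a <-> f3 1 r s t lam a /\ f4 r lam a) /\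
     (gamma_dual (c_lam r s t lam) a <-> f3 1 r s t lam a /\ f4 r lam a) /\
     (gamma_dual (linf_lam r s t lam) a <-> f3 1 r s t lam a /\ f4 r lam a)) /\
  (forall p q : R, 1 < p -> / p + / q = 1 ->
     forall a : nat -> C,
       gamma_dual (lp_lam p r s t lam) a <-> f3 q r s t lam a /\ f4 r lam a).
Proof.
  assert (hlam : forall k, lam k <> 0) by (intro k; pose proof (hpos k); lra).
  assert (hdel : forall k, lam k - prev1 0 lam k <> 0).
  { intro k; destruct k; simpl. pose proof (hpos 0%nat); lra. pose proof (hinc k); lra. }
  split.
  - intro a. rewrite (f34_RB r s t lam a 1) by lra.
    change (gamma_dual (c0_lam r s t lam) a) with (gamma_dual (fun x => c0P (What r s t lam x)) a).
    change (gamma_dual (c_lam r s t lam) a) with (gamma_dual (fun x => cP (What r s t lam x)) a).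
    change (gamma_dual (linf_lam r s t lam) a) with (gamma_dual (fun x => linfP (What r s t lam x)) a).
    rewrite !red by auto.
    set (G := Gm r s t lam a).
    pose proof (suff_inf G). pose proof (inf_c G). pose proof (c_c0 G). pose proof (nec_c0 G).
    tauto.
  - intros p q Hp Hpq a. destruct (pq_facts p q Hp Hpq) as (Hq & _ & _).
    rewrite (f34_RB r s t lam a q) by lra.
    change (gamma_dual (lp_lam p r s t lam) a) with (gamma_dual (fun x => lpP p (What r s t lam x)) a).
    rewrite red by auto. split. apply nec_p; auto. apply suff_p; auto.
Qed.
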